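(* Let $(L,\nu,\tau)$ be a Šerstnev random normed space whose triangle function satisfies $\tau(F,G)(x)\ge\sup_{t\in[0,1]}\min\{F(tx),G((1-t)x)\}$ for all $x\ge0$ and $F,G\in D^+$. If $A\subset L$ is convex and $\epsilon>0$, then $A_\epsilon=\{q\in L:\exists p\in A,\ \nu(p-q)(\epsilon)>1-\epsilon\}$ is convex.
   Context: $\Delta^+$ is the set of functions $F:[-\infty,\infty]\to[0,1]$ that are nondecreasing, left-continuous on $\mathbb R$, with $F(-\infty)=0$, $F(\infty)=1$, $F(0)=0$; ordered pointwise; $D^+=\{F\in\Delta^+:\lim_{x\to\infty}F(x)=1\}$; $\epsilon_0(x)=0$ for $x\le0$, $=1$ for $x>0$. A triangle function is $\tau:\Delta^+\times\Delta^+\to\Delta^+$ commutative, associative, nondecreasing in each argument, with $\tau(F,\epsilon_0)=F$, continuous for weak convergence. A Šerstnev random normed space $(L,\nu,\tau)$: $L$ a real vector space, $\tau$ a continuous triangle function with $\tau(D^+\times D^+)\subset D^+$, $\nu:L\to D^+$ with $\nu(p)=\epsilon_0\iff p=0$; $\nu(ap)(x)=\nu(p)(x/|a|)$ for $x\ge0$, $a\ne0$; $\nu(p+q)\ge\tau(\nu(p),\nu(q))$. *)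

(* Defs.v *)
From HB Require Import structures.
From mathcomp Require Import all_boot all_order all_algebra.
From mathcomp Require Import all_classical all_reals all_analysis.
Set Implicit Arguments. Unset Strict Implicit. Unset Printing Implicit Defensive.
Import Order.TTheory GRing.Theory Num.Theory.
Import numFieldNormedType.Exports.
Local Open Scope classical_set_scope.
Local Open Scope ring_scope.

(* A distribution function F : [-oo,+oo] -> [0,1] is represented by its
   restriction to the reals; the values F(-oo) = 0 and F(+oo) = 1 are fixed
   by convention and hence not stored.  Pointwise order on [-oo,+oo] thus
   coincides with pointwise order on R. *)
Definition distf (R : realType) := R -> R.

Definition in_Delta_plus (R : realType) (F : distf R) : Prop :=
  [/\ (forall x, 0 <= F x <= 1),
      {homo F : x y / x <= y},
      (forall x : R, F y @[y --> x^'-] --> F x) &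
      F 0 = 0].

Definition in_D_plus (R : realType) (F : distf R) : Prop :=
  in_Delta_plus F /\ F x @[x --> +oo] --> (1 : R).

Definition eps0 (R : realType) : distf R := fun x => if x <= 0 then 0 else 1.

Definition dle (R : realType) (F G : distf R) : Prop := forall x, F x <= G x.

Definition weak_cvg (R : realType) (Fn : nat -> distf R) (F : distf R) : Prop :=
  forall x : R, {for x, continuous F} -> (fun n => Fn n x) @ \oo --> F x.

Definition triangle_function (R : realType) (tau : distf R -> distf R -> distf R) : Prop :=
  ((forall F G, in_Delta_plus F -> in_Delta_plus G -> in_Delta_plus (tau F G)) /\
      (forall F G, in_Delta_plus F -> in_Delta_plus G -> tau F G = tau G F) /\
      (forall F G H, in_Delta_plus F -> in_Delta_plus G -> in_Delta_plus H ->
         tau F (tau G H) = tau (tau F G) H) /\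
      (forall F G H, in_Delta_plus F -> in_Delta_plus G -> in_Delta_plus H ->
         dle F G -> dle (tau F H) (tau G H)) /\
      (forall F, in_Delta_plus F -> tau F (@eps0 R) = F) /\
      (forall Fn Gn F G, (forall n, in_Delta_plus (Fn n)) -> (forall n, in_Delta_plus (Gn n)) ->
         in_Delta_plus F -> in_Delta_plus G ->
         weak_cvg Fn F -> weak_cvg Gn G ->
         weak_cvg (fun n => tau (Fn n) (Gn n)) (tau F G))).

Definition serstnev_RNS (R : realType) (L : lmodType R) (nu : L -> distf R)
  (tau : distf R -> distf R -> distf R) : Prop :=
  (triangle_function tau /\
      (forall F G, in_D_plus F -> in_D_plus G -> in_D_plus (tau F G)) /\
      (forall p, in_D_plus (nu p)) /\
      (forall p, nu p = @eps0 R <-> p = 0) /\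
      (forall (a : R) p x, a != 0 -> 0 <= x -> nu (a *: p) x = nu p (x / `|a|)) /\
      (forall p q, dle (tau (nu p) (nu q)) (nu (p + q)))).

Definition eps_neighbourhood (R : realType) (L : lmodType R) (nu : L -> distf R)
  (A : set L) (eps : R) : set L :=
  [set q | exists2 p, A p & nu (p - q) eps > 1 - eps].

(* Main.v *)
Require Import Defs.
From HB Require Import structures.
From mathcomp Require Import all_boot all_order all_algebra.
From mathcomp Require Import all_classical all_reals all_analysis.
Import Order.TTheory GRing.Theory Num.Theory.
Local Open Scope classical_set_scope.
Local Open Scope ring_scope.

Theorem mainTheorem7 (R : realType) (L : lmodType R) (nu : L -> distf R)
  (tau : distf R -> distf R -> distf R) :
  serstnev_RNS nu tau ->
  (forall (F G : distf R) (x : R), in_D_plus F -> in_D_plus G -> 0 <= x ->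
     tau F G x >= sup [set Num.min (F (t * x)) (G ((1 - t) * x)) | t in `[0, 1]]) ->
  forall (A : set (convex_lmodType L)) (eps : R),
    convex_set A -> 0 < eps ->
    convex_set (eps_neighbourhood nu A eps : set (convex_lmodType L)).
Proof.
move=> [_ [_ [nuD [_ [nuZ nuT]]]]] Htau A eps cA e0.
apply/convex_setW => x y; rewrite !inE => -[p1 Ap1 h1] [p2 Ap2 h2] k k0 k1.
rewrite inE; exists (@conv _ (convex_lmodType L) k p1 p2).
  by have := cA p1 p2 k; rewrite !inE; apply.
set a := k%:num in k0 k1 *.
have -> : (@conv _ (convex_lmodType L) k p1 p2) - (conv k x y) =
  a *: (p1 - x) + (1 - a) *: (p2 - y) :> L.
  rewrite /conv /= /unstable.onem -/a !scalerBr opprD addrACA.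
  by [].
set r1 := p1 - x; set r2 := p2 - y.
have a0 : a != 0 by rewrite lt0r_neq0.
have b0 : 0 < 1 - a by rewrite subr_gt0.
apply: (lt_le_trans _ (nuT _ _ eps)).
apply: (lt_le_trans _ (Htau _ _ eps (nuD _) (nuD _) (ltW e0))).
set S := [set _ | _ in _].
have ub1 : forall z, S z -> z <= 1.
  move=> z [t _ <-]; rewrite ge_min; apply/orP; left.
  by have [[/(_ (t * eps)) /andP[_ ->] _ _ _] _] := nuD (a *: r1).
apply: (lt_le_trans _ (ub_le_sup _ _)); last 2 first.
- by exists 1.
- exists a => //; by rewrite /= in_itv /= (ltW k0) (ltW k1).
rewrite nuZ ?mulr_ge0 ?(ltW k0) ?(ltW e0) // nuZ ?mulr_ge0 ?(ltW b0) ?(ltW e0) ?lt0r_neq0 //.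
rewrite !gtr0_norm // ![_ * eps]mulrC !mulfK ?lt0r_neq0 //.
by rewrite lt_min h1 h2.
Qed.
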